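(* Let $C_g$ and $C_h$ be two monotone curves in $[0,N-k]\times[0,k]$ such that $\lfloor g(j)\rfloor=\lfloor h(j)\rfloor$ for every $j=1,\dots,N-k-1$. Then the links $L_g$ and $L_h$ are isotopic.
   Context: Fix $1\le k<N$. A monotone curve $C_g$ is the graph of a strictly increasing function $g:[0,N-k]\to[0,k]$ with $g(0)=0$, $g(N-k)=k$, and $g(j)\notin\mathbb Z$ for $j=1,\dots,N-k-1$. The link $L_g$ is defined as follows. Map each point $p=(x,g(x))$ of $C_g$ to $(\bar p,\,1-\frac x{N-k})\in T\times[0,1]$, where $\bar p$ is the image of $p$ in the torus $T=\mathbb R^2/\mathbb Z^2$. Then join $((0,0),1)$ to $((0,0),0)$ by a vertical segment. Equivalently, the diagram of $L_g$ on $T$ is the projection of $C_g$. Wherever two points $(x,g(x))$ and $(x',g(x'))$ with $x<x'$ project to the same point, the strand through $(x,g(x))$ is drawn above. $L_g$ is viewed as a link in the thickened torus $T\times[0,1]$, and isotopy is taken there. *)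

(* Defs.v *)
From HB Require Import structures.
From mathcomp Require Import all_boot all_order all_algebra.
From mathcomp Require Import all_classical all_reals topology normedtype.
Set Implicit Arguments. Unset Strict Implicit. Unset Printing Implicit Defensive.
Import Order.TTheory GRing.Theory Num.Theory numFieldNormedType.Exports.
Local Open Scope classical_set_scope.
Local Open Scope ring_scope.

Section Defs.
Variable R : realType.

(* points of the universal cover R^2 x R of T x R; T x [0,1] is the slab
   modulo the deck group Z^2 acting on the first two coordinates *)
Definition pt := ((R * R) * R)%type.

Definition slab : set pt := [set p | 0 <= p.2 <= 1].

Definition monotone_curve (N k : nat) (g : R -> R) : Prop :=
  [/\ {within [set x : R | 0 <= x <= (N - k)%:R], continuous g},
      {in `[0, (N - k)%:R] &, forall x y, x < y -> g x < g y},
      g 0 = 0, g (N - k)%:R = k%:R &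
      forall j : nat, (1 <= j <= N - k - 1)%N -> g j%:R \isn't a Num.int].

(* preimage in R^2 x [0,1] of the link L_g in T x [0,1]:
   the lifted curve points (x, g x, 1 - x/(N-k)) mod Z^2 together with
   the vertical segment over (0,0) mod Z^2 *)
Definition link_lift (N k : nat) (g : R -> R) : set pt :=
  [set p | 0 <= p.2 <= 1 /\
    ((exists x : R, [/\ 0 <= x <= (N - k)%:R,
        p.2 = 1 - x / (N - k)%:R,
        p.1.1 - x \is a Num.int & p.1.2 - g x \is a Num.int])
     \/ (p.1.1 \is a Num.int /\ p.1.2 \is a Num.int))].

Definition shift (m n : int) (p : pt) : pt :=
  (p.1.1 + m%:~R, p.1.2 + n%:~R, p.2).

(* ambient isotopy of T x [0,1], described through its (unique)
   lift to the universal cover starting at the identity: a continuous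
   family of Z^2-equivariant homeomorphisms of the slab R^2 x [0,1]. *)
Definition ambient_isotopy (H : R -> pt -> pt) : Prop :=
  [/\ {within [set q : R * pt | 0 <= q.1 <= 1 /\ slab q.2],
         continuous (fun q : R * pt => H q.1 q.2)},
      (forall t, 0 <= t <= 1 ->
         exists Hi : pt -> pt,
           [/\ {within slab, continuous Hi},
               (forall p, slab p -> slab (H t p)),
               (forall p, slab p -> slab (Hi p)),
               (forall p, slab p -> Hi (H t p) = p) &
               (forall p, slab p -> H t (Hi p) = p)]),
      (forall t, 0 <= t <= 1 -> forall (m n : int) p, slab p ->
         H t (shift m n p) = shift m n (H t p)) &
      (forall p, slab p -> H 0 p = p)].

Definition links_isotopic (N k : nat) (g h : R -> R) : Prop :=
  exists H : R -> pt -> pt,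
    ambient_isotopy H /\ H 1 @` link_lift N k g = link_lift N k h.

End Defs.

(* Main.v *)
Require Import Defs.
From HB Require Import structures.
From mathcomp Require Import all_boot all_order all_algebra.
From mathcomp Require Import all_classical all_reals topology normedtype trigo.
From mathcomp Require Import lra zify.
Require Import Defs.
Set Implicit Arguments. Unset Strict Implicit. Unset Printing Implicit Defensive.
Import Order.TTheory GRing.Theory Num.Theory numFieldNormedType.Exports.
Local Open Scope classical_set_scope.
Local Open Scope ring_scope.

Section Trig.
Variable R : realType.

Lemma sin_shift_int (m : int) : exists e : R, e ^+ 2 = 1 /\
  forall y, sin (y + pi * m%:~R) = e * sin y.
Proof.
have hn (n : nat) : forall y : R, sin (y + pi * n%:R) = (-1) ^+ n * sin y.
  by move=> y; rewrite mulr_natr alternatingn //; exact: sinDpi.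
have sq (n : nat) : ((-1) ^+ n : R) ^+ 2 = 1.
  by rewrite -exprM mulnC exprM sqrrN expr1n expr1n.
case: m => n.
  by exists ((-1) ^+ n); split; [exact: sq| exact: hn].
exists ((-1) ^+ n.+1); split; first exact: sq.
move=> y; have := hn n.+1 (y + pi * (Negz n)%:~R).
have -> : y + pi * (Negz n)%:~R + pi * n.+1%:R = y.
  by rewrite NegzE intrN mulrN -pmulrn addrNK.
by move=> ->; rewrite mulrA -expr2 sq mul1r.
Qed.

Lemma sin_pi_int (m : int) : sin (pi * m%:~R) = 0 :> R.
Proof. by have [e [_ E]] := sin_shift_int m; rewrite -[_ * _]add0r E sin0 mulr0. Qed.

Lemma sin_pi_eq0 (y : R) : sin (pi * y) = 0 -> y \is a Num.int.
Proof.
move=> H; set m := Num.floor y.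
have [e [e2 E]] := sin_shift_int m.
have hu : y = (y - m%:~R) + m%:~R by rewrite subrK.
move: H; rewrite hu mulrDr E => /eqP; rewrite mulf_eq0 => /orP[/eqP e0|/eqP].
  by move: e2; rewrite e0 expr0n => /eqP; rewrite eq_sym oner_eq0.
rewrite -hu; have := floor_itv y; rewrite -/m => /andP[h1 h2].
rewrite le_eqVlt in h1; case/orP: h1 => [/eqP <-|h1].
  by move=> _; apply/intrP; exists m.
move=> H; exfalso; move: H; apply/eqP/lt0r_neq0; apply: sin_gt0_pi.
apply/andP; split; first by rewrite mulr_gt0 ?pi_gt0 ?subr_gt0.
rewrite gtr_pMr ?pi_gt0 // ltrBlDr; rewrite intrD in h2; by rewrite addrC.
Qed.

Definition sq (y : R) := sin (pi * y) ^+ 2.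

Lemma sq_ge0 y : 0 <= sq y.
Proof. by rewrite /sq sqr_ge0. Qed.

Lemma sq_shift y (m : int) : sq (y + m%:~R) = sq y.
Proof.
have [e [e2 E]] := sin_shift_int m.
by rewrite /sq mulrDr E exprMn e2 mul1r.
Qed.

Lemma sq_int (m : int) : sq m%:~R = 0.
Proof. by rewrite /sq sin_pi_int expr0n. Qed.

Lemma sq_eq0 y : sq y = 0 -> y \is a Num.int.
Proof. by move=> /eqP; rewrite /sq expf_eq0 /= => /eqP; apply: sin_pi_eq0. Qed.

Lemma sin_pi_ge0 u : 0 <= u <= 1 -> 0 <= sin (pi * u) :> R.
Proof.
move=> /andP[u0 u1]; apply: sin_ge0_pi; rewrite mulr_ge0 ?pi_ge0 //=.
by rewrite ler_piMr ?pi_ge0.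
Qed.

Lemma sin_pi_gt0 u : 0 < u < 1 -> 0 < sin (pi * u) :> R.
Proof.
move=> /andP[u0 u1]; apply: sin_gt0_pi; rewrite mulr_gt0 ?pi_gt0 //=.
by rewrite gtr_pMr ?pi_gt0.
Qed.

Lemma K1 (G H : R) : Num.floor G = Num.floor H -> G \isn't a Num.int ->
  H \isn't a Num.int -> 0 < sin (pi * G) * sin (pi * H).
Proof.
move=> fl nG nH; set m := Num.floor G.
have [e [e2 E]] := sin_shift_int m.
have eY Y : sin (pi * Y) = e * sin (pi * (Y - m%:~R)) by rewrite -E -mulrDr subrK.
rewrite (eY G) (eY H) mulrACA -expr2 e2 mul1r.
have pos (Y : R) : Num.floor Y = m -> Y \isn't a Num.int -> 0 < sin (pi * (Y - m%:~R)).
  move=> fY nY; apply: sin_pi_gt0; have := floor_itv Y; rewrite fY => /andP[h1 h2].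
  rewrite subr_gt0 ltrBlDr addrC -intrD1 h2 andbT lt_neqAle h1 andbT.
  by apply: contra nY => /eqP <-; apply/intrP; exists m.
by apply: mulr_gt0; [apply: pos | apply: pos; rewrite -?fl].
Qed.

Lemma K2 (G H l : R) : 0 < sin (pi * G) * sin (pi * H) -> `|H - G| < 1 ->
  0 <= l <= 1 -> sin (pi * (G + l * (H - G))) != 0.
Proof.
move=> hp hD /andP[l0 l1]; apply/eqP => /sin_pi_eq0 /intrP [m hm].
have [e [e2 E]] := sin_shift_int m.
set M := G + l * (H - G) in hm.
have eY Y : sin (pi * Y) = e * sin (pi * (Y - m%:~R)) by rewrite -E -mulrDr subrK.
have hG : G - m%:~R = - (l * (H - G)) by rewrite -hm /M opprD addNKr.
have hH : H - m%:~R = (1 - l) * (H - G).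
  by rewrite -hm /M opprD addrA mulrBl mul1r.
move: hp; rewrite (eY G) (eY H) hG hH mulrACA -expr2 e2 mul1r mulrN sinN mulNr.
rewrite oppr_gt0 -[_ < 0]negbK -leNgt.
set D := H - G.
move=> /negP; apply.
have h1 : 0 <= 1 - l by rewrite subr_ge0.
have hD1 : -1 < D < 1 by rewrite -ltr_norml.
have in01M (u v : R) : 0 <= u <= 1 -> 0 <= v <= 1 -> 0 <= u * v <= 1.
  move=> /andP[u0 u1] /andP[v0 v1]; rewrite mulr_ge0 //=.
  exact: mulr_ile1.
have hl : 0 <= l <= 1 by rewrite l0 l1.
have hl' : 0 <= 1 - l <= 1 by rewrite h1 gerBl.
case/andP: hD1 => hD1 hD2.
case: (lerP 0 D) => D0.
  have hD0 : 0 <= D <= 1 by rewrite D0 ltW.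
  by apply: mulr_ge0; apply: sin_pi_ge0; apply: in01M.
have A (u : R) : 0 <= u <= 1 -> sin (pi * (u * D)) <= 0.
  move=> hu; rewrite -[D]opprK mulrN mulrN sinN oppr_le0; apply: sin_pi_ge0.
  by apply: in01M => //; apply/andP; split; lra.
by apply: mulr_le0; apply: A.
Qed.


Lemma norm_divle1 (B D : R) : 0 <= B <= D -> `|B / D| <= 1.
Proof.
move=> /andP[B0 BD]; have [->|D0] := eqVneq D 0; first by rewrite invr0 mulr0 normr0.
have Dp : 0 < D by rewrite lt_neqAle eq_sym D0 (le_trans B0 BD).
rewrite ger0_norm; last by apply: divr_ge0 => //; exact: ltW.
by rewrite ler_pdivrMr // mul1r.
Qed.

Lemma cont_divsq (T : topologicalType) (A B D : T -> R) (x : T) :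
  {for x, continuous A} -> {for x, continuous B} -> {for x, continuous D} ->
  (forall y, 0 <= B y <= D y) -> (D x = 0 -> A x = 0) ->
  {for x, continuous (fun y => A y * B y / D y)}.
Proof.
move=> cA cB cD hBD hA.
have [Dx|Dx] := eqVneq (D x) 0; last first.
  apply: continuousM; first exact: continuousM.
  exact: continuousV.
have Ax := hA Dx.
rewrite /prop_for /continuous_at /= Dx invr0 mulr0.
apply: (@squeeze_cvgr _ _ _ _ (fun y => - `|A y|) (fun y => `|A y|)).
- apply: nearW => y; rewrite -ler_norml -mulrA normrM.
  by rewrite ler_piMr ?normr_ge0 // norm_divle1.
- rewrite -oppr0 -(@normr0 _ R) -Ax; apply: cvgN; exact: cvg_norm.
- rewrite -(@normr0 _ R) -Ax; exact: cvg_norm.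
Qed.


Lemma sq_cont : continuous sq.
Proof.
move=> y; rewrite /sq; apply: continuousM; apply: continuous_comp;
  [| exact: continuous_sin| | exact: continuous_sin];
  by apply: continuousM; [exact: cvg_cst | exact: cvg_id].
Qed.

Lemma within_comp (T : topologicalType) (A : set R) (f : T -> R) (g : R -> R) :
  {within A, continuous g} -> continuous f -> (forall x, A (f x)) ->
  continuous (g \o f).
Proof.
move=> cg0 cf Af x P /= hP.
have cg := (proj1 (@subspace_continuousP _ A _ g) cg0).
have H0 := cg _ (Af x).
have H := H0 P hP.
have H' : nbhs (f x) (fun y => A y -> P (g y)) := H.
have H2 : nbhs x (f @^-1` (fun y => A y -> P (g y))) by exact: cf x _ H'.
rewrite /= /nbhs /=; move: H2; apply: filterS => y /= Hy; exact: Hy (Af y).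
Qed.


Lemma not_int01 (y : R) : 0 < y < 1 -> y \isn't a Num.int.
Proof.
move=> /andP[y0 y1]; apply/negP => /intrP [m hm].
by move: y0 y1; rewrite hm ltr0z ltrz1; lia.
Qed.

Lemma mulK_cond (A S : R) : (S = 0 -> A = 0) -> A * Num.min S S / S = A.
Proof.
move=> hS; rewrite minxx; have [S0|S0] := eqVneq S 0; first by rewrite hS // !mul0r.
by rewrite mulfK.
Qed.

Lemma w_int (A S D : R) (n : int) : 0 <= S -> A * Num.min (sq n%:~R) S / D = 0.
Proof. by move=> S0; rewrite sq_int (min_idPl S0) mulr0 mul0r. Qed.

Variables (N k : nat) (g h : R -> R).
Hypotheses (hk : (1 <= k)%N) (hkN : (k < N)%N)
  (mg : monotone_curve N k g) (mh : monotone_curve N k h)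
  (hfl : forall j : nat, (1 <= j <= N - k - 1)%N ->
     Num.floor (g j%:R) = Num.floor (h j%:R)).

Definition LL : R := (N - k)%:R.
Definition zc (z : R) := Num.max 0 (Num.min z 1).
Definition Xc z := LL * (1 - zc z).
Definition Gz z := g (Xc z).
Definition Hz z := h (Xc z).
Definition Dl z := Hz z - Gz z.
Definition kap z := Num.max 0 (sin (pi * Gz z) * sin (pi * Hz z)) *
  Num.max 0 (1 - `|Dl z|).
Definition del z := kap z / 4.
Definition X1 z := Xc z + del z.
Definition den z := sq (Xc z) + sq (X1 z).
Definition Mz z := Gz z + Dl z * sq (X1 z) / den z.

Definition w1 (y z : R) := del z * Num.min (sq y) (sq (Gz z)) / sq (Gz z).
Definition w2 (y z : R) := Dl z * Num.min (sq y) (sq (X1 z)) / den z.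
Definition w3 (y z : R) := - (del z * Num.min (sq y) (sq (Mz z)) / sq (Mz z)).
Definition w4 (y z : R) := Dl z * Num.min (sq y) (sq (Xc z)) / den z.

Lemma LL_gt0 : 0 < LL.
Proof. by rewrite /LL ltr0n subn_gt0. Qed.

Lemma zc_id z : 0 <= z <= 1 -> zc z = z.
Proof. by move=> /andP[z0 z1]; rewrite /zc (min_idPl z1) (max_idPr z0). Qed.

Lemma zc_in z : 0 <= zc z <= 1.
Proof.
rewrite /zc; apply/andP; split; first by rewrite le_max lexx.
by rewrite ge_max ler01 /= ge_min lexx orbT.
Qed.

Lemma Xc_in z : 0 <= Xc z <= LL.
Proof.
have := zc_in z; have := LL_gt0; rewrite /Xc => hL /andP[h0 h1].
apply/andP; split; first by rewrite mulr_ge0 ?subr_ge0 // ltW.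
rewrite ler_piMr //; try lra; exact: ltW.
Qed.

Lemma Xc_int z : Xc z \is a Num.int -> exists j, (j <= N - k)%N /\ Xc z = j%:R.
Proof.
move=> hi; have /andP[h0 h1] := Xc_in z.
move: hi; rewrite intrEge0 // => /natrP [j hj]; exists j; split => //.
by move: h1; rewrite hj /LL ler_nat.
Qed.


Lemma max0_ge0 (p : R) : 0 <= Num.max 0 p.
Proof. by rewrite le_max lexx. Qed.

Lemma kap_ge0 z : 0 <= kap z.
Proof. by rewrite /kap mulr_ge0 // max0_ge0. Qed.

Lemma kap_le1 z : kap z <= 1.
Proof.
rewrite /kap; apply: mulr_ile1; rewrite ?max0_ge0 // ge_max ler01 /=.
  apply: (le_trans (ler_norm _)); rewrite normrM; apply: mulr_ile1 => //; exact: sin_max.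
by rewrite gerBl.
Qed.

Lemma kap_pos z : 0 < kap z ->
  0 < sin (pi * Gz z) * sin (pi * Hz z) /\ `|Dl z| < 1.
Proof.
rewrite /kap; set p := sin _ * sin _; set q := 1 - _.
case: (leP p 0) => hp; first by rewrite mul0r ltxx.
case: (leP q 0) => hq; first by rewrite mulr0 ltxx.
by move=> _; split => //; move: hq; rewrite /q subr_gt0.
Qed.

Lemma del_ge0 z : 0 <= del z.
Proof. by rewrite /del divr_ge0 ?kap_ge0. Qed.

Lemma del_lt1 z : del z < 1.
Proof. have := kap_le1 z; rewrite /del; lra. Qed.

Lemma kap_interior z (j : nat) : (1 <= j <= N - k - 1)%N -> Xc z = j%:R -> 0 < kap z.
Proof.
move=> hj hx; case: mg => _ _ _ _ ng; case: mh => _ _ _ _ nh.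
have fl := hfl hj.
have s0 : 0 < sin (pi * Gz z) * sin (pi * Hz z).
  by rewrite /Gz /Hz hx; apply: K1 => //; [exact: ng | exact: nh].
have d1 : `|Dl z| < 1.
  have := floor_itv (g j%:R); have := floor_itv (h j%:R).
  rewrite /Dl /Hz /Gz hx -fl intrD.
  move=> /andP[a1 a2] /andP[b1 b2]; rewrite ltr_norml; apply/andP; split; lra.
rewrite /kap (max_idPr (ltW s0)) (max_idPr _); last by rewrite subr_ge0 ltW.
by rewrite mulr_gt0 // subr_gt0.
Qed.


Lemma delG z : sq (Gz z) = 0 -> del z = 0.
Proof.
move=> /eqP; rewrite /sq expf_eq0 /= => /eqP s0.
by rewrite /del /kap s0 mul0r maxxx mul0r mul0r.
Qed.

Lemma den0 z : den z = 0 -> Dl z = 0.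
Proof.
move=> /eqP; rewrite paddr_eq0 ?sq_ge0 // => /andP[/eqP a /eqP b].
have [j [hj hx]] := Xc_int (sq_eq0 a).
case: mg => _ _ g0 gL _; case: mh => _ _ h0 hL _.
rewrite /Dl /Hz /Gz hx.
have [->|j0] := eqVneq j 0%N; first by rewrite g0 h0 subrr.
have [jL|jL] := eqVneq j (N - k)%N; first by rewrite jL gL hL subrr.
have hj' : (1 <= j <= N - k - 1)%N by apply/andP; split; lia.
have kp := kap_interior hj' hx.
have d0 : 0 < del z by rewrite /del divr_gt0.
exfalso; move: b; rewrite /X1 hx addrC -[j%:R]/((Posz j)%:~R) sq_shift => /sq_eq0.
by apply/negP; apply: not_int01; rewrite d0 del_lt1.
Qed.

Lemma delM z : sq (Mz z) = 0 -> del z = 0.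
Proof.
move=> hM; apply/eqP; apply/negPn/negP => hd.
have kp : 0 < kap z.
  by rewrite lt_neqAle kap_ge0 andbT eq_sym; apply: contra hd => /eqP k0; rewrite /del k0 mul0r.
have [p0 d1] := kap_pos kp.
have hl : 0 <= sq (X1 z) / den z <= 1.
  apply/andP; split; first by rewrite divr_ge0 ?sq_ge0 ?addr_ge0 ?sq_ge0.
  apply: le_trans (ler_norm _) _; apply: norm_divle1.
  by rewrite sq_ge0 /den /= lerDr sq_ge0.
have := K2 p0 d1 hl; rewrite -/(Dl z) (mulrC (_ / _)) mulrA -/(Mz z).
move: hM => /eqP; rewrite /sq expf_eq0 /= => /eqP ->.
by rewrite eqxx.
Qed.


Lemma cM (T : topologicalType) (f1 f2 : T -> R) :
  continuous f1 -> continuous f2 -> continuous (fun x => f1 x * f2 x).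
Proof. by move=> cf cg y; apply: continuousM; [exact: cf | exact: cg]. Qed.
Lemma cD (T : topologicalType) (f1 f2 : T -> R) :
  continuous f1 -> continuous f2 -> continuous (fun x => f1 x + f2 x).
Proof. by move=> cf cg y; apply: continuousD; [exact: cf | exact: cg]. Qed.
Lemma cB (T : topologicalType) (f1 f2 : T -> R) :
  continuous f1 -> continuous f2 -> continuous (fun x => f1 x - f2 x).
Proof. by move=> cf cg y; apply: continuousB; [exact: cf | exact: cg]. Qed.
Lemma cN (T : topologicalType) (f1 : T -> R) :
  continuous f1 -> continuous (fun x => - f1 x).
Proof. by move=> cf y; apply: continuousN; exact: cf. Qed.
Lemma cC (T : topologicalType) (c : R) : continuous (fun _ : T => c).
Proof. by move=> x; exact: cvg_cst. Qed.
Lemma cmin (T : topologicalType) (f1 f2 : T -> R) :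
  continuous f1 -> continuous f2 -> continuous (fun x => Num.min (f1 x) (f2 x)).
Proof. by move=> cf cg y; apply: (@continuous_min R T f1 f2); [exact: cf | exact: cg]. Qed.
Lemma cmax (T : topologicalType) (f1 f2 : T -> R) :
  continuous f1 -> continuous f2 -> continuous (fun x => Num.max (f1 x) (f2 x)).
Proof. by move=> cf cg y; apply: (@continuous_max R T f1 f2); [exact: cf | exact: cg]. Qed.
Lemma cnorm (T : topologicalType) (f1 : T -> R) :
  continuous f1 -> continuous (fun x => `|f1 x|).
Proof. by move=> cf x; apply: (continuous_comp (f := f1)); [exact: cf | exact: cvg_norm]. Qed.
Lemma ccomp (T : topologicalType) (f1 : T -> R) (u : R -> R) :
  continuous f1 -> continuous u -> continuous (fun x => u (f1 x)).
Proof. by move=> cf cu x; apply: (continuous_comp (f := f1)); [exact: cf | exact: cu]. Qed.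

Lemma zc_cont : continuous zc.
Proof. by rewrite /zc; apply: cmax; [exact: cC | apply: cmin; [move=> x; exact: cvg_id | exact: cC]]. Qed.

Lemma Xc_cont : continuous Xc.
Proof. by rewrite /Xc; apply: cM; [exact: cC | apply: cB; [exact: cC | exact: zc_cont]]. Qed.

Lemma Gz_cont : continuous Gz.
Proof.
case: mg => cg _ _ _ _; apply: (within_comp cg Xc_cont) => x; exact: Xc_in.
Qed.

Lemma Hz_cont : continuous Hz.
Proof.
case: mh => cg _ _ _ _; apply: (within_comp cg Xc_cont) => x; exact: Xc_in.
Qed.

Lemma Dl_cont : continuous Dl.
Proof. by apply: cB; [exact: Hz_cont | exact: Gz_cont]. Qed.

Lemma sinpi_cont (f : R -> R) : continuous f -> continuous (fun z => sin (pi * f z)).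
Proof.
move=> cf; apply: (ccomp (f1 := fun z => pi * f z)); last exact: continuous_sin.
by apply: cM; [exact: cC | exact: cf].
Qed.

Lemma sq_comp_cont (T : topologicalType) (f : T -> R) :
  continuous f -> continuous (fun z => sq (f z)).
Proof. by move=> cf; apply: ccomp; [exact: cf | exact: sq_cont]. Qed.

Lemma kap_cont : continuous kap.
Proof.
rewrite /kap; apply: cM; apply: cmax; try exact: cC.
  by apply: cM; apply: sinpi_cont; [exact: Gz_cont | exact: Hz_cont].
by apply: cB; [exact: cC | apply: cnorm; exact: Dl_cont].
Qed.

Lemma del_cont : continuous del.
Proof. by rewrite /del; apply: cM; [exact: kap_cont | exact: cC]. Qed.

Lemma X1_cont : continuous X1.
Proof. by apply: cD; [exact: Xc_cont | exact: del_cont]. Qed.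

Lemma den_cont : continuous den.
Proof. by apply: cD; apply: sq_comp_cont; [exact: Xc_cont | exact: X1_cont]. Qed.

Lemma cont_divsq' (T : topologicalType) (A B D : T -> R) :
  continuous A -> continuous B -> continuous D ->
  (forall y, 0 <= B y <= D y) -> (forall y, D y = 0 -> A y = 0) ->
  continuous (fun y => A y * B y / D y).
Proof.
move=> cA cB cD hBD hA x; apply: cont_divsq => //; [exact: cA|exact: cB|exact: cD|exact: hA].
Qed.

Lemma Mz_cont : continuous Mz.
Proof.
apply: cD; first exact: Gz_cont.
apply: cont_divsq'; [exact: Dl_cont | exact: sq_comp_cont X1_cont | exact: den_cont | | exact: den0].
by move=> y; rewrite sq_ge0 /den /= lerDr sq_ge0.
Qed.


Lemma fstc (U V : topologicalType) : continuous (fun q : U * V => q.1).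
Proof. by move=> q; exact: cvg_fst. Qed.
Lemma sndc (U V : topologicalType) : continuous (fun q : U * V => q.2).
Proof. by move=> q; exact: cvg_snd. Qed.
Lemma pairc (T U V : topologicalType) (f1 : T -> U) (f2 : T -> V) :
  continuous f1 -> continuous f2 -> continuous (fun x => (f1 x, f2 x)).
Proof. by move=> c1 c2 x; apply: cvg_pair; [exact: c1 | exact: c2]. Qed.
Lemma compc (T U V : topologicalType) (f1 : T -> U) (f2 : U -> V) :
  continuous f1 -> continuous f2 -> continuous (fun x => f2 (f1 x)).
Proof. by move=> c1 c2 x; apply: (continuous_comp (f := f1)); [exact: c1 | exact: c2]. Qed.

Lemma wcont (w : R -> R -> R) (A : R -> R) (B D : R -> R -> R) :
  continuous A -> continuous (fun q : R * R => B q.1 q.2) ->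
  continuous (fun q : R * R => D q.1 q.2) ->
  (forall y z, 0 <= B y z <= D y z) -> (forall y z, D y z = 0 -> A z = 0) ->
  (forall y z, w y z = A z * B y z / D y z) ->
  continuous (fun q : R * R => w q.1 q.2).
Proof.
move=> cA cB cD hB hD hw.
have -> : (fun q : R * R => w q.1 q.2) = (fun q => A q.2 * B q.1 q.2 / D q.1 q.2).
  by apply: funext => q; rewrite hw.
apply: cont_divsq'.
- by apply: (compc (f1 := fun q : R * R => q.2)) => //; exact: sndc.
- exact: cB.
- exact: cD.
- by move=> q; exact: hB.
- by move=> q; exact: hD.
Qed.

Lemma minsq_bound (y S : R) : 0 <= S -> 0 <= Num.min (sq y) S <= S.
Proof. by move=> S0; rewrite le_min sq_ge0 S0 /= ge_min lexx orbT. Qed.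

Lemma sqfst : continuous (fun q : R * R => sq q.1).
Proof. by apply: sq_comp_cont; exact: fstc. Qed.
Lemma sndF (F : R -> R) : continuous F -> continuous (fun q : R * R => F q.2).
Proof. by move=> cF; apply: (compc (f1 := fun q : R * R => q.2)) => //; exact: sndc. Qed.

Lemma w1_cont : continuous (fun q : R * R => w1 q.1 q.2).
Proof.
apply: (@wcont _ del (fun y z => Num.min (sq y) (sq (Gz z))) (fun _ z => sq (Gz z))) => //.
- exact: del_cont.
- by apply: (@cmin (R * R)%type (fun q => sq q.1) (fun q => sq (Gz q.2))); [exact sqfst | exact: (sndF (sq_comp_cont Gz_cont))].
- by simpl; exact: (sndF (sq_comp_cont Gz_cont)).
- by move=> y z; apply: minsq_bound; exact: sq_ge0.
- by move=> y z; exact: delG.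
Qed.

Lemma w2_cont : continuous (fun q : R * R => w2 q.1 q.2).
Proof.
apply: (@wcont _ Dl (fun y z => Num.min (sq y) (sq (X1 z))) (fun _ z => den z)) => //.
- exact: Dl_cont.
- by simpl; apply: cmin; [exact: sqfst | exact: (sndF (sq_comp_cont X1_cont))].
- by simpl; exact: (sndF den_cont).
- move=> y z; have := minsq_bound y (sq_ge0 (X1 z)) => /andP[a b].
  by rewrite a /= (le_trans b) // /den lerDr sq_ge0.
- by move=> y z; exact: den0.
Qed.

Lemma w4_cont : continuous (fun q : R * R => w4 q.1 q.2).
Proof.
apply: (@wcont _ Dl (fun y z => Num.min (sq y) (sq (Xc z))) (fun _ z => den z)) => //.
- exact: Dl_cont.
- by simpl; apply: cmin; [exact: sqfst | exact: (sndF (sq_comp_cont Xc_cont))].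
- by simpl; exact: (sndF den_cont).
- move=> y z; have := minsq_bound y (sq_ge0 (Xc z)) => /andP[a b].
  by rewrite a /= (le_trans b) // /den lerDl sq_ge0.
- by move=> y z; exact: den0.
Qed.

Lemma w3_cont : continuous (fun q : R * R => w3 q.1 q.2).
Proof.
rewrite /w3; apply: cN.
apply: (@wcont (fun y z => del z * Num.min (sq y) (sq (Mz z)) / sq (Mz z)) del
  (fun y z => Num.min (sq y) (sq (Mz z))) (fun _ z => sq (Mz z))) => //.
- exact: del_cont.
- by simpl; apply: cmin; [exact: sqfst | exact: (sndF (sq_comp_cont Mz_cont))].
- by simpl; exact: (sndF (sq_comp_cont Mz_cont)).
- by move=> y z; apply: minsq_bound; exact: sq_ge0.
- by move=> y z; exact: delM.
Qed.


Definition pT (q : R * pt R) : R := q.1.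
Definition pA (q : R * pt R) : R := q.2.1.1.
Definition pB (q : R * pt R) : R := q.2.1.2.
Definition pZ (q : R * pt R) : R := q.2.2.

Lemma pT_c : continuous pT. Proof. exact: fstc. Qed.
Lemma pA_c : continuous pA.
Proof.
have c1 : continuous (fun q : R * pt R => q.2) by exact: sndc.
have c2 : continuous (fun q : pt R => q.1) by exact: fstc.
have c3 : continuous (fun q : R * R => q.1) by exact: fstc.
exact: (compc (compc c1 c2) c3).
Qed.
Lemma pB_c : continuous pB.
Proof.
have c1 : continuous (fun q : R * pt R => q.2) by exact: sndc.
have c2 : continuous (fun q : pt R => q.1) by exact: fstc.
have c3 : continuous (fun q : R * R => q.2) by exact: sndc.
exact: (compc (compc c1 c2) c3).
Qed.
Lemma pZ_c : continuous pZ.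
Proof.
have c1 : continuous (fun q : R * pt R => q.2) by exact: sndc.
have c2 : continuous (fun q : pt R => q.2) by exact: sndc.
exact: (compc c1 c2).
Qed.

Definition shA (w : R -> R -> R) (q : R * pt R) : R * pt R :=
  (pT q, (pA q + pT q * w (pB q) (pZ q), pB q, pZ q)).
Definition shB (w : R -> R -> R) (q : R * pt R) : R * pt R :=
  (pT q, (pA q, pB q + pT q * w (pA q) (pZ q), pZ q)).

Lemma shA_cont w : continuous (fun q : R * R => w q.1 q.2) -> continuous (shA w).
Proof.
move=> cw.
have W : continuous (fun q => w (pB q) (pZ q)) := compc (pairc pB_c pZ_c) cw.
exact: (pairc pT_c (pairc (pairc (cD pA_c (cM pT_c W)) pB_c) pZ_c)).
Qed.

Lemma shB_cont w : continuous (fun q : R * R => w q.1 q.2) -> continuous (shB w).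
Proof.
move=> cw.
have W : continuous (fun q => w (pA q) (pZ q)) := compc (pairc pA_c pZ_c) cw.
exact: (pairc pT_c (pairc (pairc pA_c (cD pB_c (cM pT_c W))) pZ_c)).
Qed.


Definition negw (w : R -> R -> R) := fun y z => - w y z.

Lemma negw_cont w : continuous (fun q : R * R => w q.1 q.2) ->
  continuous (fun q : R * R => negw w q.1 q.2).
Proof. by move=> cw; rewrite /negw; apply: cN. Qed.

Lemma shA_K w q : shA (negw w) (shA w q) = q.
Proof. by case: q => t [[a b] z]; rewrite /shA /pT /pA /pB /pZ /negw /= mulrN addrK. Qed.
Lemma shB_K w q : shB (negw w) (shB w q) = q.
Proof. by case: q => t [[a b] z]; rewrite /shB /pT /pA /pB /pZ /negw /= mulrN addrK. Qed.
Lemma shA_Kn w q : shA w (shA (negw w) q) = q.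
Proof. by case: q => t [[a b] z]; rewrite /shA /pT /pA /pB /pZ /negw /= mulrN subrK. Qed.
Lemma shB_Kn w q : shB w (shB (negw w) q) = q.
Proof. by case: q => t [[a b] z]; rewrite /shB /pT /pA /pB /pZ /negw /= mulrN subrK. Qed.

Lemma shA_fst w q : (shA w q).1 = q.1. Proof. by []. Qed.
Lemma shB_fst w q : (shB w q).1 = q.1. Proof. by []. Qed.
Lemma shA_z w q : (shA w q).2.2 = q.2.2. Proof. by []. Qed.
Lemma shB_z w q : (shB w q).2.2 = q.2.2. Proof. by []. Qed.

Lemma shA_0 w p : shA w (0, p) = (0, p).
Proof. by case: p => [[a b] z]; rewrite /shA /pT /pA /pB /pZ /= mul0r addr0. Qed.
Lemma shB_0 w p : shB w (0, p) = (0, p).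
Proof. by case: p => [[a b] z]; rewrite /shB /pT /pA /pB /pZ /= mul0r addr0. Qed.

Definition periodic1 (w : R -> R -> R) := forall y z (n : int), w (y + n%:~R) z = w y z.

Lemma shA_shift w : periodic1 w -> forall t m n p,
  shA w (t, shift m n p) = (t, shift m n (shA w (t, p)).2).
Proof.
move=> hw t m n [[a b] z].
by rewrite /shA /shift /pT /pA /pB /pZ /= hw addrAC.
Qed.
Lemma shB_shift w : periodic1 w -> forall t m n p,
  shB w (t, shift m n p) = (t, shift m n (shB w (t, p)).2).
Proof.
move=> hw t m n [[a b] z].
by rewrite /shB /shift /pT /pA /pB /pZ /= hw addrAC.
Qed.

Lemma negw_per w : periodic1 w -> periodic1 (negw w).
Proof. by move=> hw y z n; rewrite /negw hw. Qed.

Lemma w1_per : periodic1 w1. Proof. by move=> y z n; rewrite /w1 sq_shift. Qed.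
Lemma w2_per : periodic1 w2. Proof. by move=> y z n; rewrite /w2 sq_shift. Qed.
Lemma w3_per : periodic1 w3. Proof. by move=> y z n; rewrite /w3 sq_shift. Qed.
Lemma w4_per : periodic1 w4. Proof. by move=> y z n; rewrite /w4 sq_shift. Qed.

Definition Hf (q : R * pt R) := shB w4 (shA w3 (shB w2 (shA w1 q))).
Definition Hinvf (q : R * pt R) :=
  shA (negw w1) (shB (negw w2) (shA (negw w3) (shB (negw w4) q))).
Definition Hmap (t : R) (p : pt R) : pt R := (Hf (t, p)).2.
Definition Hinv (t : R) (p : pt R) : pt R := (Hinvf (t, p)).2.

Lemma Hf_cont : continuous Hf.
Proof.
exact: (compc (compc (compc (shA_cont w1_cont) (shB_cont w2_cont)) (shA_cont w3_cont))
  (shB_cont w4_cont)).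
Qed.

Lemma Hinvf_cont : continuous Hinvf.
Proof.
exact: (compc (compc (compc (shB_cont (negw_cont w4_cont)) (shA_cont (negw_cont w3_cont)))
  (shB_cont (negw_cont w2_cont))) (shA_cont (negw_cont w1_cont))).
Qed.

Lemma Hf_fst q : (Hf q).1 = q.1. Proof. by []. Qed.
Lemma Hinvf_fst q : (Hinvf q).1 = q.1. Proof. by []. Qed.

Lemma pairE (q : R * pt R) : (q.1, q.2) = q. Proof. by case: q. Qed.

Lemma Hinv_Hmap t p : Hinv t (Hmap t p) = p.
Proof.
rewrite /Hinv /Hmap -[(t, (Hf (t, p)).2)]/((Hf (t,p)).1, (Hf (t, p)).2) pairE.
by rewrite /Hinvf /Hf shB_K shA_K shB_K shA_K.
Qed.

Lemma Hmap_Hinv t p : Hmap t (Hinv t p) = p.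
Proof.
rewrite /Hinv /Hmap -[(t, (Hinvf (t, p)).2)]/((Hinvf (t,p)).1, (Hinvf (t, p)).2) pairE.
by rewrite /Hinvf /Hf shA_Kn shB_Kn shA_Kn shB_Kn.
Qed.

Lemma Hmap_z t p : (Hmap t p).2 = p.2. Proof. by []. Qed.
Lemma Hinv_z t p : (Hinv t p).2 = p.2. Proof. by []. Qed.

Lemma Hmap0 p : Hmap 0 p = p.
Proof. by rewrite /Hmap /Hf (shA_0 w1) (shB_0 w2) (shA_0 w3) (shB_0 w4). Qed.

Lemma Hmap_shift t m n p : Hmap t (shift m n p) = shift m n (Hmap t p).
Proof.
rewrite /Hmap /Hf (shA_shift w1_per).
set q1 := shA w1 (t, p).
rewrite -[(t, _ q1.2)]/(q1.1, shift m n q1.2) (shB_shift w2_per).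
set q2 := shB w2 _.
rewrite -[(q1.1, _ q2.2)]/(q2.1, shift m n q2.2) (shA_shift w3_per).
set q3 := shA w3 _.
by rewrite -[(q2.1, _ q3.2)]/(q3.1, shift m n q3.2) (shB_shift w4_per) !pairE.
Qed.


Lemma shA_E w t a b z : shA w (t, (a, b, z)) = (t, (a + t * w b z, b, z)).
Proof. by []. Qed.
Lemma shB_E w t a b z : shB w (t, (a, b, z)) = (t, (a, b + t * w a z, z)).
Proof. by []. Qed.

Lemma w1_int n z : w1 n%:~R z = 0.
Proof. by rewrite /w1 w_int // sq_ge0. Qed.
Lemma w2_int n z : w2 n%:~R z = 0.
Proof. by rewrite /w2 w_int // sq_ge0. Qed.
Lemma w3_int n z : w3 n%:~R z = 0.
Proof. by rewrite /w3 w_int ?oppr0 // sq_ge0. Qed.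
Lemma w4_int n z : w4 n%:~R z = 0.
Proof. by rewrite /w4 w_int // sq_ge0. Qed.

Lemma Hmap_int t (m n : int) z : Hmap t (m%:~R, n%:~R, z) = (m%:~R, n%:~R, z).
Proof.
rewrite /Hmap /Hf [shA w1 _]shA_E w1_int mulr0 addr0 [shB w2 _]shB_E w2_int mulr0 addr0.
by rewrite [shA w3 _]shA_E w3_int mulr0 addr0 [shB w4 _]shB_E w4_int mulr0 addr0.
Qed.

Lemma Hmap_curve (m n : int) z :
  Hmap 1 (Xc z + m%:~R, Gz z + n%:~R, z) = (Xc z + m%:~R, Hz z + n%:~R, z).
Proof.
rewrite /Hmap /Hf [shA w1 _]shA_E mul1r w1_per /w1 mulK_cond; last exact: delG.
rewrite (addrAC _ _ (del z)) -/(X1 z).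
rewrite [shB w2 _]shB_E mul1r w2_per /w2 minxx (addrAC _ _ (Dl z * _ / _)) -/(Mz z).
rewrite [shA w3 _]shA_E mul1r w3_per /w3 mulK_cond; last exact: delM.
rewrite /X1 (addrAC _ _ (- del z)) addrK.
rewrite [shB w4 _]shB_E mul1r w4_per /w4 minxx (addrAC _ (n%:~R)).
congr (_, _, _); congr (_ + _).
rewrite /Mz -addrA -mulrDl -mulrDr (addrC (sq (X1 z))) -/(den z).
have [d0|d0] := eqVneq (den z) 0.
  have := den0 d0; rewrite /Dl => /eqP; rewrite subr_eq0 => /eqP ->.
  by rewrite d0 invr0 !mulr0 addr0.
by rewrite -mulrA divff // mulr1 /Dl addrC subrK.
Qed.


Lemma Xc_x z x : 0 <= z <= 1 -> z = 1 - x / LL -> Xc z = x.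
Proof.
move=> hz zx; rewrite /Xc zc_id // zx opprB addrC subrK mulrC divfK //.
by have := LL_gt0; rewrite lt0r => /andP[].
Qed.


Lemma link_fwd (p : pt R) : link_lift N k g p -> link_lift N k h (Hmap 1 p).
Proof.
case: p => [[a b] z] /= [hz [[x [hx zx /intrP[m hm] /intrP[n hn]]] | [/intrP[m hm] /intrP[n hn]]]].
- have Xx := Xc_x hz zx.
  have ha : a = Xc z + m%:~R by rewrite Xx -hm addrC subrK.
  have hb : b = Gz z + n%:~R by rewrite /Gz Xx -hn addrC subrK.
  rewrite ha hb Hmap_curve; split => //; left; exists x; split => //.
  + by rewrite Xx addrC addKr; apply/intrP; exists m.
  + by rewrite /Hz Xx addrC addKr; apply/intrP; exists n.
- move: hm hn => /= hm hn; rewrite hm hn Hmap_int; split => //; right; split; apply/intrP; [exists m | exists n] => //.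
Qed.

Lemma link_bwd (p : pt R) : link_lift N k h p -> exists2 q, link_lift N k g q & Hmap 1 q = p.
Proof.
case: p => [[a b] z] /= [hz [[x [hx zx /intrP[m hm] /intrP[n hn]]] | [/intrP[m hm] /intrP[n hn]]]].
- have Xx := Xc_x hz zx.
  exists (Xc z + m%:~R, Gz z + n%:~R, z); last first.
    rewrite Hmap_curve /Hz Xx; move: hm hn => /= hm hn.
    by rewrite -hm -hn [x + _]addrC subrK [h x + _]addrC subrK.
  split => //; left; exists x; split => //.
  + by rewrite Xx addrC addKr; apply/intrP; exists m.
  + by rewrite /Gz Xx addrC addKr; apply/intrP; exists n.
- move: hm hn => /= hm hn; exists (m%:~R, n%:~R, z); last by rewrite Hmap_int hm hn.
  by split => //; right; split; apply/intrP; [exists m | exists n].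
Qed.

Lemma main_iso : links_isotopic N k g h.
Proof.
exists Hmap; split.
  split.
  - apply: continuous_subspaceT.
    have -> : (fun q : R * pt R => Hmap q.1 q.2) = (fun q => (Hf q).2).
      by apply: funext => q; rewrite /Hmap pairE.
    exact: (compc Hf_cont (@sndc R (pt R))).
  - move=> t ht; exists (Hinv t); split.
    + apply: continuous_subspaceT.
      have c1 : continuous (fun p : pt R => (t, p)).
        by apply: pairc; [move=> p; exact: cvg_cst | move=> p; exact: cvg_id].
      exact: (compc (compc c1 Hinvf_cont) (@sndc R (pt R))).
    + by move=> p hp; exact: hp.
    + by move=> p hp; exact: hp.
    + by move=> p _; exact: Hinv_Hmap.
    + by move=> p _; exact: Hmap_Hinv.
  - by move=> t _ m n p _; exact: Hmap_shift.
  - by move=> p _; exact: Hmap0.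
apply/seteqP; split.
  by move=> _ [p hp <-]; exact: link_fwd.
by move=> p /link_bwd [q hq <-]; exists q.
Qed.

End Trig.

Theorem corollary4p1 (R : realType) (N k : nat) (g h : R -> R) :
  (1 <= k)%N -> (k < N)%N ->
  monotone_curve N k g -> monotone_curve N k h ->
  (forall j : nat, (1 <= j <= N - k - 1)%N ->
     Num.floor (g j%:R) = Num.floor (h j%:R)) ->
  links_isotopic N k g h.
Proof. by move=> hk hkN mg mh hfl; exact: (main_iso hk hkN mg mh hfl). Qed.
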